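(* Let $X,Z\in\mathbb{R}^{n\times r}$, let $\mathbf{e}=\mathrm{vec}(XX^{T}-ZZ^{T})\in\mathbb{R}^{n^{2}}$ and let $\mathbf{J}\in\mathbb{R}^{n^{2}\times nr}$ be the matrix satisfying $\mathbf{J}\,\mathrm{vec}(Y)=\mathrm{vec}(XY^{T}+YX^{T})$ for all $Y\in\mathbb{R}^{n\times r}$. If $\mathbf{J}^{\dagger}\mathbf{e}=0$, then either $XX^{T}=ZZ^{T}$ or $\sigma_{r}(X)=0$.
   Context: $\mathrm{vec}$ is the column-stacking vectorization, $\mathbf{J}^{\dagger}$ the Moore–Penrose pseudoinverse, and $\sigma_{r}(X)$ the $r$-th largest singular value of $X$. *)

(* Defs.v *)
From HB Require Import structures.
From mathcomp Require Import all_boot all_order all_algebra.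
From mathcomp Require Import boolp classical_sets reals.
Set Implicit Arguments. Unset Strict Implicit. Unset Printing Implicit Defensive.
Import Order.TTheory GRing.Theory Num.Theory.
Local Open Scope ring_scope.

Section Defs.
Variable R : realType.

(* column-stacking vectorization: vec A = [A_{.,1}; A_{.,2}; ...].
   mathcomp's mxvec is row-major, so column-stacking of A is the row-major
   stacking of A^T, transposed into a column vector. *)
Definition vec m n (A : 'M[R]_(m, n)) : 'cV[R]_(n * m) := (mxvec A^T)^T.

Definition is_pinv m k (A : 'M[R]_(m, k)) (P : 'M[R]_(k, m)) : Prop :=
  [/\ A *m P *m A = A, P *m A *m P = P,
      (A *m P)^T = A *m P & (P *m A)^T = P *m A].

(* Moore--Penrose pseudoinverse: the (unique) matrix satisfying the Penrose
   conditions. *)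
Definition pinv m k (A : 'M[R]_(m, k)) : 'M[R]_(k, m) :=
  xget 0 [set P | is_pinv A P].

(* s is the list of singular values of X (n x r), in nonincreasing order:
   the nonnegative square roots of the r eigenvalues (with multiplicity) of
   X^T X. *)
Definition is_sing_vals n r (X : 'M[R]_(n, r)) (s : seq R) : Prop :=
  [/\ size s = r, sorted (fun a b => b <= a) s, all (fun x => 0 <= x) s &
      char_poly (X^T *m X) = \prod_(x <- s) ('X - (x ^+ 2)%:P)].

Definition sing_vals n r (X : 'M[R]_(n, r)) : seq R :=
  xget [::] [set s | is_sing_vals X s].

(* sigma X k = k-th largest singular value (1-indexed). *)
Definition sigma n r (X : 'M[R]_(n, r)) (k : nat) : R :=
  nth 0 (sing_vals X) k.-1.

End Defs.

(* Main.v *)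
Require Import Defs.
From HB Require Import structures.
From mathcomp Require Import all_boot all_order all_algebra.
From mathcomp Require Import boolp classical_sets reals.
Import Order.TTheory GRing.Theory Num.Theory.
Set Implicit Arguments. Unset Strict Implicit.
Local Open Scope ring_scope.

Section H.
Variable R : realType.

Lemma rv_norm0 q (y : 'rV[R]_q) : y *m y^T = 0 -> y = 0.
Proof.
move=> /matrixP /(_ 0 0); rewrite [LHS]mxE [RHS]mxE => H.
have H1 : \sum_j y 0 j * y 0 j = 0.
  by rewrite -[RHS]H; apply: eq_bigr => j _; rewrite [y^T _ _]mxE.
have H0 : forall j, true -> 0 <= y 0 j * y 0 j by move=> j _; rewrite -expr2 sqr_ge0.
have H2 : forall j, true -> y 0 j * y 0 j = 0 by apply: (psumr_eq0P H0).
apply/rowP => j; rewrite [RHS]mxE.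
by have /eqP := H2 j isT; rewrite mulf_eq0 orbb => /eqP.
Qed.

Lemma unit_of_ker k (M : 'M[R]_k) : (forall v : 'rV_k, v *m M = 0 -> v = 0) -> M \in unitmx.
Proof.
move=> H; rewrite -row_free_unit -kermx_eq0; apply/eqP/row_matrixP => i.
rewrite row0; apply: H; apply/sub_kermxP; exact: row_sub.
Qed.

Lemma gram_unit p q (M : 'M[R]_(p,q)) : row_free M -> (M *m M^T) \in unitmx.
Proof.
move=> fM; apply: unit_of_ker => v Hv.
have : (v *m M) *m (v *m M)^T = 0 by rewrite trmx_mul mulmxA -(mulmxA v) Hv mul0mx.
move/rv_norm0 => H0; apply: (row_free_inj fM); by rewrite H0 mul0mx.
Qed.

Lemma pinv_fact p m k (B : 'M[R]_(m,p)) (C : 'M[R]_(p,k)) :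
  (B^T *m B) \in unitmx -> (C *m C^T) \in unitmx ->
  is_pinv (B *m C) (C^T *m invmx (C *m C^T) *m invmx (B^T *m B) *m B^T).
Proof.
move=> uB uC.
have sym : forall p (S : 'M[R]_p), S^T = S -> (invmx S)^T = invmx S.
  by move=> p' S hS; rewrite trmx_inv hS.
have sB : (B^T *m B)^T = B^T *m B by rewrite trmx_mul trmxK.
have sC : (C *m C^T)^T = C *m C^T by rewrite trmx_mul trmxK.
have AP : B *m C *m (C^T *m invmx (C *m C^T) *m invmx (B^T *m B) *m B^T) = B *m invmx (B^T *m B) *m B^T.
  by rewrite -!mulmxA (mulmxA C) (mulmxA (C *m C^T)) mulmxV // mul1mx.
have PA : (C^T *m invmx (C *m C^T) *m invmx (B^T *m B) *m B^T) *m (B *m C) = C^T *m invmx (C *m C^T) *m C.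
  by rewrite !mulmxA -(mulmxA _ B^T) -(mulmxA _ (invmx _)) mulVmx // mulmx1.
split.
- by rewrite AP -!mulmxA (mulmxA B^T) (mulmxA (invmx _)) mulVmx // mul1mx.
- by rewrite PA -!mulmxA (mulmxA C) (mulmxA (invmx (C *m C^T))) mulVmx // mul1mx.
- by rewrite AP !trmx_mul trmxK sym // -mulmxA.
- by rewrite PA !trmx_mul trmxK sym // -mulmxA.
Qed.

Lemma pinv_exists m k (A : 'M[R]_(m,k)) : exists P, is_pinv A P.
Proof.
have fC : row_free (row_base A) by apply: row_base_free.
have fB : row_free (col_base A)^T.
  by move: (col_base_full A); rewrite /row_free /row_full mxrank_tr.
have uC := gram_unit fC.
have uB := gram_unit fB; rewrite trmxK in uB.
rewrite -(mulmx_base A); eexists; exact: pinv_fact uB uC.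
Qed.
Lemma vec_dot m n (A B : 'M[R]_(m,n)) : ((vec A)^T *m vec B) 0 0 = \tr (A *m B^T).
Proof.
rewrite /vec trmxK mxE /mxtrace.
rewrite (reindex (uncurry (@mxvec_index n m))) /=; last first.
  by case: (@curry_mxvec_bij n m) => g h1 h2; exists g => x _; [apply: h1| apply: h2].
rewrite (eq_bigr (fun p => A p.2 p.1 * B p.2 p.1)); last first.
  by case=> j i _; rewrite /uncurry /= [(mxvec B^T)^T _ _]mxE !mxvecE !mxE.
rewrite -(pair_big xpredT xpredT (fun j i => A i j * B i j)) /= exchange_big /=.
by apply: eq_bigr => i _; rewrite mxE; apply: eq_bigr => j _; rewrite mxE.
Qed.
Lemma sig_unit n r (X : 'M[R]_(n, r)) : sigma X r != 0 -> (X^T *m X) \in unitmx.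
Proof.
rewrite /sigma /sing_vals.
case: (pselect (exists s, is_sing_vals X s)) => [ex|nex]; last first.
  rewrite xgetPN ?nth_nil ?eqxx // => s /= hs; apply: nex; by exists s.
have := xgetPex [::] ex.
set s := xget _ _ => /= [[sz srt nn cp]] hnz.
rewrite unitmxE unitfE.
apply: contra hnz => /eqP hd.
have : (char_poly (X^T *m X))`_0 = 0 by rewrite char_poly_det hd mulr0.
rewrite -horner_coef0 cp horner_prod.
under eq_bigr do rewrite hornerXsubC.
move/eqP; rewrite prodf_seq_eq0 => /hasP [x xs /=].
rewrite sub0r oppr_eq0 sqrf_eq0 => /eqP x0.
have le := @sorted_leq_nth _ (fun a b => b <= a) _ _ 0 s srt (index x s) (size s).-1.
have ps : (0 < size s)%N by case: (s) xs.
have := le (fun b a c h1 h2 => le_trans h2 h1) (fun a => lexx a).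
rewrite !inE index_mem xs prednK // leqnn nth_index // -ltnS prednK // index_mem xs => /(_ isT isT isT).
rewrite sz x0 => h1.
have h2 : 0 <= s`_r.-1 by apply: (allP nn); rewrite mem_nth // -sz prednK.
by rewrite eq_le h1 h2.
Qed.
Lemma alg_final n r (X Z : 'M[R]_(n, r)) : (X^T *m X) \in unitmx ->
  (X *m X^T - Z *m Z^T) *m X = 0 -> X *m X^T = Z *m Z^T.
Proof.
set G := X^T *m X => uG.
rewrite mulmxBl => /eqP; rewrite subr_eq0 => /eqP; rewrite -!mulmxA -/G => hZ.
have sG : G^T = G by rewrite /G trmx_mul trmxK.
set K := Z^T *m X.
have KK : K^T *m K = G *m G.
  by rewrite /K trmx_mul trmxK -mulmxA -hZ mulmxA.
have uK : K \in unitmx.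
  have : K^T *m K \in unitmx by rewrite KK unitmx_mul uG.
  by rewrite unitmx_mul => /andP[].
set W := invmx K; set V := G *m W.
have VV : V^T *m V = 1%:M.
  rewrite /V trmx_mul sG mulmxA -(mulmxA W^T) -KK.
  rewrite -mulmxA -(mulmxA K^T) /W mulmxV // mulmx1 -trmx_mul mulmxV //.
  exact: trmx1.
have VV' := mulmx1C VV.
have eZ : Z = X *m V.
  by rewrite /V mulmxA hZ -mulmxA -/K /W mulmxV // mulmx1.
by rewrite eZ trmx_mul mulmxA -(mulmxA X) VV' mulmx1.
Qed.
Lemma EX0 n r (X Z : 'M[R]_(n, r)) (J : 'M[R]_(n * n, r * n)) :
  (forall Y : 'M[R]_(n, r), J *m vec Y = vec (X *m Y^T + Y *m X^T)) ->
  pinv J *m vec (X *m X^T - Z *m Z^T) = 0 ->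
  (X *m X^T - Z *m Z^T) *m X = 0.
Proof.
move=> hJ hP.
set E := X *m X^T - Z *m Z^T.
have [h1 h2 h3 h4] : is_pinv J (pinv J) by rewrite /pinv; apply: xgetPex; apply: pinv_exists.
have Jt : J^T *m vec E = 0.
  have -> : J^T = J^T *m (J *m pinv J) by rewrite -h3 -trmx_mul h1.
  by rewrite -!mulmxA hP !mulmx0.
have sE : E^T = E by rewrite /E linearB /= !trmx_mul !trmxK.
have key : \tr ((X *m (E *m X)^T + E *m X *m X^T) *m E^T) = 0.
  rewrite -vec_dot -hJ trmx_mul -mulmxA Jt mulmx0; exact: mxE.
have : \tr ((X *m (E *m X)^T + E *m X *m X^T) *m E^T) = 2 * \tr ((E *m X) *m (E *m X)^T).
  rewrite sE mulmxDl mxtraceD mulr2n mulrDl !mul1r.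
  by rewrite mxtrace_mulC !trmx_mul sE !mulmxA.
rewrite key => /esym /eqP; rewrite mulf_eq0 pnatr_eq0 /= -vec_dot => /eqP h0.
have : (vec (E *m X))^T *m vec (E *m X) = 0.
  by apply/matrixP => i j; rewrite !ord1 h0 mxE.
rewrite -{2}(trmxK (vec (E *m X))) => /rv_norm0.
move/(congr1 trmx); rewrite trmxK trmx0 /vec => /(congr1 trmx); rewrite trmxK trmx0.
by move/eqP; rewrite mxvec_eq0 -trmx0 (inj_eq trmx_inj) => /eqP.
Qed.
End H.

Theorem lemma12 (R : realType) (n r : nat) (X Z : 'M[R]_(n, r))
    (J : 'M[R]_(n * n, r * n)) :
  (forall Y : 'M[R]_(n, r), J *m vec Y = vec (X *m Y^T + Y *m X^T)) ->
  pinv J *m vec (X *m X^T - Z *m Z^T) = 0 ->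
  X *m X^T = Z *m Z^T \/ sigma X r = 0.
Proof.
move=> hJ hP; case: (eqVneq (sigma X r) 0) => [->|hs]; [by right | left].
exact: alg_final (sig_unit hs) (EX0 hJ hP).
Qed.
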